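(* Let $0<p_0<1$, $0<\beta\le1$, $0\le\alpha\le1$ with $\alpha\le\beta$, $\epsilon>0$, $\omega\ge0$, $\gamma_0\ge\gamma\ge0$. Let $\omega(t),\epsilon_x(t),\epsilon_y(t),\delta\gamma_t$ be real-valued functions of time with $|\omega(t)|\le\omega$, $\sqrt{\epsilon_x^2(t)+\epsilon_y^2(t)}\le\epsilon$, $|\delta\gamma_t|\le\gamma$, and set $H(t)=[1+\omega(t)]I_z+\epsilon_x(t)I_x+\epsilon_y(t)I_y$, $\gamma_t=\gamma_0+\delta\gamma_t$. Let the qubit density matrix $\rho_t$ evolve according to $$\dot\rho_t=-i[H(t),\rho_t]+\gamma_t\Big(\sigma_-\rho_t\sigma_+-\tfrac12\sigma_+\sigma_-\rho_t-\tfrac12\rho_t\sigma_+\sigma_-\Big)$$ from an initial state $\rho_0$ with $\langle1|\rho_0|1\rangle\le\alpha p_0$. Let $$T_a=\frac{2p_0}{\sqrt{4\epsilon^2+(\gamma_0+\gamma)^2}+(\gamma_0+\gamma)}.$$ Then for every $t\in[0,(1-\beta)T_a]$, $\rho_t\in\mathcal{D}_a=\{\rho:\langle0|\rho|0\rangle\ge1-p_0\}$; equivalently, a projective measurement of $\sigma_z$ at time $t$ has probability of failure $p=\langle1|\rho_t|1\rangle\le p_0$.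
   Context: $\sigma_x,\sigma_y,\sigma_z$ are the Pauli matrices $\begin{pmatrix}0&1\\1&0\end{pmatrix},\begin{pmatrix}0&-i\\i&0\end{pmatrix},\begin{pmatrix}1&0\\0&-1\end{pmatrix}$, $I_j=\frac12\sigma_j$, $\sigma_-=\frac12(\sigma_x-i\sigma_y)$, $\sigma_+=\frac12(\sigma_x+i\sigma_y)$, $[A,B]=AB-BA$. $|0\rangle=(1,0)^T$, $|1\rangle=(0,1)^T$ are the eigenvectors of $\sigma_z$ with eigenvalues $1,-1$. Units with $\hbar=1$. The probability of failure is the probability that a $\sigma_z$ measurement yields $|1\rangle$. *)

(* Defs.v *)
From HB Require Import structures.
From mathcomp Require Import all_boot all_order all_algebra.
From mathcomp.real_closed Require Import complex.
From mathcomp Require Import all_classical all_reals topology normedtype derive.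
Set Implicit Arguments.
Unset Strict Implicit.
Unset Printing Implicit Defensive.
Import Order.TTheory GRing.Theory Num.Theory.
Import numFieldNormedType.Exports.
Local Open Scope ring_scope.
Local Open Scope classical_set_scope.

Section QubitDefs.
Variable R : realType.
Local Notation C := (complex R).

Definition rc (x : R) : C := Complex x 0.
Definition iC : C := Complex 0 1.

Definition sigma_x : 'M[C]_2 :=
  \matrix_(i < 2, j < 2) (if i == j then 0 else 1).
Definition sigma_y : 'M[C]_2 :=
  \matrix_(i < 2, j < 2)
    (if i == j then 0 else if (i == 0 :> nat) then - iC else iC).
Definition sigma_z : 'M[C]_2 :=
  \matrix_(i < 2, j < 2)
    (if i == j then (if (i == 0 :> nat) then 1 else -1) else 0).

Definition I_x : 'M[C]_2 := rc (1/2) *: sigma_x.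
Definition I_y : 'M[C]_2 := rc (1/2) *: sigma_y.
Definition I_z : 'M[C]_2 := rc (1/2) *: sigma_z.
Definition sigma_m : 'M[C]_2 := rc (1/2) *: (sigma_x - iC *: sigma_y).
Definition sigma_p : 'M[C]_2 := rc (1/2) *: (sigma_x + iC *: sigma_y).

Definition comm (A B : 'M[C]_2) : 'M[C]_2 := A *m B - B *m A.

Definition ket0 : 'cV[C]_2 := \col_(i < 2) (if (i == 0 :> nat) then 1 else 0).
Definition ket1 : 'cV[C]_2 := \col_(i < 2) (if (i == 0 :> nat) then 0 else 1).

Definition adj {m n} (A : 'M[C]_(m, n)) : 'M[C]_(n, m) := (map_mx conjc A)^T.

Definition mel (v : 'cV[C]_2) (A : 'M[C]_2) (w : 'cV[C]_2) : C :=
  (adj v *m A *m w) 0 0.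

Definition density_matrix (rho : 'M[C]_2) : Prop :=
  adj rho = rho /\ (forall v : 'cV[C]_2, 0 <= mel v rho v) /\ \tr rho = 1.

Definition Ham (om ex ey : R -> R) (t : R) : 'M[C]_2 :=
  rc (1 + om t) *: I_z + rc (ex t) *: I_x + rc (ey t) *: I_y.

Definition lindblad_rhs (H : 'M[C]_2) (g : R) (rho : 'M[C]_2) : 'M[C]_2 :=
  - iC *: comm H rho
  + rc g *: (sigma_m *m rho *m sigma_p
             - rc (1/2) *: (sigma_p *m sigma_m *m rho)
             - rc (1/2) *: (rho *m sigma_p *m sigma_m)).

Definition mx_has_deriv (f : R -> 'M[C]_2) (t : R) (D : 'M[C]_2) : Prop :=
  forall i j : 'I_2,
    is_derive t (1 : R) (fun s => complex.Re (f s i j)) (complex.Re (D i j)) /\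
    is_derive t (1 : R) (fun s => complex.Im (f s i j)) (complex.Im (D i j)).

Definition mx_right_cont0 (f : R -> 'M[C]_2) : Prop :=
  forall i j : 'I_2,
    (fun s => complex.Re (f s i j)) @ 0^'+ --> complex.Re (f 0 i j) /\
    (fun s => complex.Im (f s i j)) @ 0^'+ --> complex.Im (f 0 i j).

Definition T_a (p0 eps gamma0 gamma : R) : R :=
  2 * p0 / (Num.sqrt (4 * eps ^+ 2 + (gamma0 + gamma) ^+ 2) + (gamma0 + gamma)).

Definition in_Da (p0 : R) (rho : 'M[C]_2) : Prop :=
  rc (1 - p0) <= mel ket0 rho ket0.

Definition fail_prob (rho : 'M[C]_2) : C := mel ket1 rho ket1.

End QubitDefs.

Arguments iC {R}.
Arguments sigma_x {R}. Arguments sigma_y {R}. Arguments sigma_z {R}.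
Arguments I_x {R}. Arguments I_y {R}. Arguments I_z {R}.
Arguments sigma_m {R}. Arguments sigma_p {R}.
Arguments ket0 {R}. Arguments ket1 {R}.

(* Main.v *)
Require Import Defs.
From HB Require Import structures.
From mathcomp Require Import all_boot all_order all_algebra.
From mathcomp.real_closed Require Import complex.
From mathcomp Require Import all_classical all_reals topology normedtype derive.
From mathcomp Require Import sequences exp realfun.
From mathcomp.algebra_tactics Require Import ring lra.
Import Order.TTheory GRing.Theory Num.Theory.
Import numFieldNormedType.Exports.
Local Open Scope ring_scope.
Local Open Scope classical_set_scope.
Section Alg.
Context {R : realType}.
Local Notation C := (complex R).
Local Notation Re := complex.Re.
Local Notation Im := complex.Im.

Lemma ReD' (x y : C) : Re (x + y) = Re x + Re y. Proof. by move: x y => [a b] [c d]. Qed.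
Lemma ImD' (x y : C) : Im (x + y) = Im x + Im y. Proof. by move: x y => [a b] [c d]. Qed.
Lemma ReN' (x : C) : Re (- x) = - Re x. Proof. by case: x. Qed.
Lemma ImN' (x : C) : Im (- x) = - Im x. Proof. by case: x. Qed.
Lemma ReM' (x y : C) : Re (x * y) = Re x * Re y - Im x * Im y. Proof. by move: x y => [a b] [c d]. Qed.
Lemma ImM' (x y : C) : Im (x * y) = Re x * Im y + Im x * Re y. Proof. by move: x y => [a b] [c d]. Qed.
Lemma Re0' : Re (0 : C) = 0. Proof. reflexivity. Qed.
Lemma Im0' : Im (0 : C) = 0. Proof. reflexivity. Qed.
Lemma Re1' : Re (1 : C) = 1. Proof. reflexivity. Qed.
Lemma Im1' : Im (1 : C) = 0. Proof. reflexivity. Qed.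
Lemma Rerc (x : R) : Re (rc x) = x. Proof. reflexivity. Qed.
Lemma Imrc (x : R) : Im (rc x) = 0. Proof. reflexivity. Qed.
Lemma ReiC : Re (iC : C) = 0. Proof. reflexivity. Qed.
Lemma ImiC : Im (iC : C) = 1. Proof. reflexivity. Qed.

Definition mx2 (a b c d : C) : 'M[C]_2 :=
  \matrix_(i < 2, j < 2) if i == 0 :> nat then (if j == 0 :> nat then a else b)
                         else (if j == 0 :> nat then c else d).

Lemma ord2P (P : 'I_2 -> Prop) : P 0 -> P 1 -> forall i, P i.
Proof.
move=> P0 P1 [[|[|n]] Hi].
- by rewrite (_ : Ordinal Hi = 0) //; apply: val_inj.
- by rewrite (_ : Ordinal Hi = 1) //; apply: val_inj.
- by [].
Qed.

Lemma mx2_eta (M : 'M[C]_2) : M = mx2 (M 0 0) (M 0 1) (M 1 0) (M 1 1).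
Proof.
apply/matrixP; apply: ord2P; apply: ord2P; by rewrite mxE.
Qed.

Lemma mx2_eq a b c d a' b' c' d' : a = a' -> b = b' -> c = c' -> d = d' ->
  mx2 a b c d = mx2 a' b' c' d'.
Proof. by move=> -> -> -> ->. Qed.

Lemma mx2E00 a b c d : mx2 a b c d 0 0 = a. Proof. by rewrite mxE. Qed.
Lemma mx2E01 a b c d : mx2 a b c d 0 1 = b. Proof. by rewrite mxE. Qed.
Lemma mx2E10 a b c d : mx2 a b c d 1 0 = c. Proof. by rewrite mxE. Qed.
Lemma mx2E11 a b c d : mx2 a b c d 1 1 = d. Proof. by rewrite mxE. Qed.

Lemma mul_mx2 a b c d e f g h :
  mx2 a b c d *m mx2 e f g h =
  mx2 (a*e+b*g) (a*f+b*h) (c*e+d*g) (c*f+d*h).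
Proof.
apply/matrixP; apply: ord2P; apply: ord2P; by rewrite !mxE !big_ord_recr big_ord0 /= ?mxE add0r ?mxE.
Qed.

Lemma add_mx2 a b c d e f g h :
  mx2 a b c d + mx2 e f g h = mx2 (a+e) (b+f) (c+g) (d+h).
Proof. apply/matrixP; apply: ord2P; apply: ord2P; by rewrite !mxE. Qed.

Lemma opp_mx2 a b c d : - mx2 a b c d = mx2 (-a) (-b) (-c) (-d).
Proof. apply/matrixP; apply: ord2P; apply: ord2P; by rewrite !mxE. Qed.

Lemma scale_mx2 k a b c d : k *: mx2 a b c d = mx2 (k*a) (k*b) (k*c) (k*d).
Proof. apply/matrixP; apply: ord2P; apply: ord2P; by rewrite !mxE. Qed.

Lemma sx2 : sigma_x = mx2 0 1 1 0 :> 'M[C]_2.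
Proof. apply/matrixP; apply: ord2P; apply: ord2P; by rewrite !mxE. Qed.
Lemma sy2 : sigma_y = mx2 0 (-iC) iC 0 :> 'M[C]_2.
Proof. apply/matrixP; apply: ord2P; apply: ord2P; by rewrite !mxE. Qed.
Lemma sz2 : sigma_z = mx2 1 0 0 (-1) :> 'M[C]_2.
Proof. apply/matrixP; apply: ord2P; apply: ord2P; by rewrite !mxE. Qed.


Lemma ReC (a b : R) : Re (Complex a b) = a. Proof. by []. Qed.
Lemma ImC (a b : R) : Im (Complex a b) = b. Proof. by []. Qed.
Ltac pushRI := rewrite ?(ReC, ImC, ReD', ImD', ReN', ImN', ReM', ImM', Re0', Im0', Re1', Im1', Rerc, Imrc, ReiC, ImiC).

Lemma ceq (u v : C) : Re u = Re v -> Im u = Im v -> u = v.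
Proof. by move: u v => [a b] [c d] /= -> ->. Qed.

Lemma Ham2 (w x y : R) :
  rc w *: I_z + rc x *: I_x + rc y *: I_y =
  mx2 (rc (w/2)) (Complex (x/2) (-(y/2))) (Complex (x/2) (y/2)) (rc (-(w/2))).
Proof.
rewrite /I_x /I_y /I_z sx2 sy2 sz2.
do ![rewrite scale_mx2 | rewrite add_mx2].
by apply: mx2_eq; apply: ceq; pushRI; ring.
Qed.

Lemma sm2 : sigma_m = mx2 0 0 1 0 :> 'M[C]_2.
Proof.
rewrite /sigma_m sx2 sy2.
do ![rewrite scale_mx2 | rewrite add_mx2 | rewrite opp_mx2].
by apply: mx2_eq; apply: ceq; pushRI; field.
Qed.

Lemma sp2 : sigma_p = mx2 0 1 0 0 :> 'M[C]_2.
Proof.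
rewrite /sigma_p sx2 sy2.
do ![rewrite scale_mx2 | rewrite add_mx2 | rewrite opp_mx2].
by apply: mx2_eq; apply: ceq; pushRI; field.
Qed.

Lemma comm_mx2 p q r s a b c d :
  comm (mx2 p q r s) (mx2 a c d b) =
  mx2 (q * d - c * r) (p * c + q * b - a * q - c * s) (r * a + s * d - d * p - b * r) (r * c - d * q).
Proof.
rewrite /comm !mul_mx2 opp_mx2 add_mx2; apply: mx2_eq; ring.
Qed.

Lemma diss_mx2 a b c d :
  sigma_m *m mx2 a c d b *m sigma_p
  - rc (1/2) *: (sigma_p *m sigma_m *m mx2 a c d b)
  - rc (1/2) *: (mx2 a c d b *m sigma_p *m sigma_m) =
  mx2 (- (rc (1/2) * a) - rc (1/2) * a) (- (rc (1/2) * c)) (- (rc (1/2) * d)) a.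
Proof.
rewrite sm2 sp2 !mul_mx2 !scale_mx2 !opp_mx2 !add_mx2; apply: mx2_eq; ring.
Qed.

Lemma rhs_comp (w x y g : R) (M : 'M[C]_2) :
  let D := lindblad_rhs (rc w *: I_z + rc x *: I_x + rc y *: I_y) g M in
  let ar := Re (M 0 0) in let ai := Im (M 0 0) in
  let br := Re (M 1 1) in let bi := Im (M 1 1) in
  let cr := Re (M 0 1) in let ci := Im (M 0 1) in
  let dr := Re (M 1 0) in let di := Im (M 1 0) in
  let hr := x / 2 in let hi := y / 2 in
  let ur := br - ar in let ui := bi - ai in
  (Re (D 0 0) = hr * di - hi * dr - cr * hi - ci * hr - g * ar /\
      Im (D 0 0) = - (hr * dr + hi * di - cr * hr + ci * hi) - g * ai /\
      Re (D 1 1) = - (hr * di - hi * dr - cr * hi - ci * hr) + g * ar /\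
      Im (D 1 1) = (hr * dr + hi * di - cr * hr + ci * hi) + g * ai /\
      Re (D 0 1) = w * ci + hr * ui - hi * ur - g * cr / 2 /\
      Im (D 0 1) = - (w * cr + hr * ur + hi * ui) - g * ci / 2 /\
      Re (D 1 0) = - w * di - hr * ui - hi * ur - g * dr / 2 /\
      Im (D 1 0) = w * dr + hr * ur - hi * ui - g * di / 2).
Proof.
move=> D; rewrite /D (mx2_eta M).
rewrite !mx2E00 !mx2E01 !mx2E10 !mx2E11.
move: (M 0 0) (M 0 1) (M 1 0) (M 1 1) => a c d b.
rewrite Ham2 /lindblad_rhs comm_mx2 diss_mx2 !scale_mx2 add_mx2.
rewrite !mx2E00 !mx2E01 !mx2E10 !mx2E11.
have e1 := @ReiC; have e2 := @ImiC.
have e3 := Rerc g; have e4 := Imrc g.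
have e5 := Rerc (1/2); have e6 := Imrc (1/2).
have e7 := Rerc (w/2); have e8 := Imrc (w/2).
have e9 := Rerc (-(w/2)); have e10 := Imrc (-(w/2)).
have e11 := ReC (x/2) (-(y/2)); have e12 := ImC (x/2) (-(y/2)).
have e13 := ReC (x/2) (y/2); have e14 := ImC (x/2) (y/2).
move: (iC : C) e1 e2 (rc g) e3 e4 (rc (1/2)) e5 e6 (rc (w/2)) e7 e8
  (rc (-(w/2))) e9 e10 (Complex (x/2) (-(y/2))) e11 e12 (Complex (x/2) (y/2)) e13 e14.
move=> I e1 e2 G e3 e4 hh e5 e6 P e7 e8 S e9 e10 Q e11 e12 Rr e13 e14.
(repeat split; rewrite ?(ReD', ImD', ReN', ImN', ReM', ImM') ?e1 ?e2 ?e3 ?e4 ?e5 ?e6 ?e7 ?e8 ?e9 ?e10 ?e11 ?e12 ?e13 ?e14; field; done).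
Qed.

Lemma sum2 (F : 'I_2 -> C) : \sum_(i < 2) F i = F 0 + F 1.
Proof. rewrite big_ord_recl big_ord1; congr (F _ + F _); exact: val_inj. Qed.

Lemma tr_mx2 (M : 'M[C]_2) : \tr M = M 0 0 + M 1 1.
Proof. by rewrite /mxtrace sum2. Qed.

Lemma mel_expand (v : 'cV[C]_2) (M : 'M[C]_2) :
  mel v M v = conjc (v 0 0) * (M 0 0 * v 0 0 + M 0 1 * v 1 0)
            + conjc (v 1 0) * (M 1 0 * v 0 0 + M 1 1 * v 1 0).
Proof.
rewrite /mel /adj mxE sum2 !mxE !sum2 !mxE.
ring.
Qed.

Lemma adjE (M : 'M[C]_2) i j : adj M i j = conjc (M j i).
Proof. by rewrite /adj !mxE. Qed.

Lemma mel_ket1 (M : 'M[C]_2) : mel ket1 M ket1 = M 1 1.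
Proof.
rewrite mel_expand /ket1 !mxE /=.
have z : ((- 0)*i)%C = 0 :> C by apply: ceq => //=; rewrite oppr0.
have o : (1 -i* 0)%C = 1 :> C by apply: ceq => //=; rewrite oppr0.
by rewrite z o; ring.
Qed.

Lemma mel_ket0 (M : 'M[C]_2) : mel ket0 M ket0 = M 0 0.
Proof.
rewrite mel_expand /ket0 !mxE /=.
have z : ((- 0)*i)%C = 0 :> C by apply: ceq => //=; rewrite oppr0.
have o : (1 -i* 0)%C = 1 :> C by apply: ceq => //=; rewrite oppr0.
by rewrite z o; ring.
Qed.

Lemma mel_vec (p q : C) (M : 'M[C]_2) :
  mel (\col_(i < 2) (if i == 0 :> nat then p else q)) M
      (\col_(i < 2) (if i == 0 :> nat then p else q)) =
  conjc p * (M 0 0 * p + M 0 1 * q) + conjc q * (M 1 0 * p + M 1 1 * q).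
Proof. by rewrite mel_expand !mxE. Qed.

Lemma mono0 (f df : R -> R) : f @ 0^'+ --> f 0 ->
  (forall s : R, 0 < s -> is_derive s 1 f (df s)) ->
  (forall s : R, 0 < s -> df s <= 0) -> forall t, 0 <= t -> f t <= f 0.
Proof.
move=> fc fd fn t; rewrite le_eqVlt => /predU1P[<-|t0] //.
apply: (cvgr_to_ge fc).
near=> s.
have s0 : 0 < s by near: s; exact: nbhs_right_gt.
have st : s < t by near: s; exact: nbhs_right_lt.
apply: (@ler0_derive1_le_cc _ f s t).
- move=> x; rewrite in_itv /= => /andP[sx _].
  by have [] := fd x (lt_trans s0 sx).
- move=> x; rewrite in_itv /= => /andP[sx _].
  by rewrite derive1E; have [_ ->] := fd x (lt_trans s0 sx); apply: fn; exact: lt_trans s0 sx.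
- apply: derivable_within_continuous => x; rewrite in_itv /= => /andP[sx _].
  by have [] := fd x (lt_le_trans s0 sx).
- by rewrite in_itv /= lexx ltW.
- by rewrite in_itv /= lexx ltW.
- exact: ltW.
Unshelve. all: end_near.
Qed.

Lemma cont_of_der {f : R -> R} {x d : R} : is_derive x 1 f d -> f @ x --> f x.
Proof.
move=> [df _]; apply/differentiable_continuous; exact/derivable1_diffP.
Qed.

Lemma barrier (f df : R -> R) : f @ 0^'+ --> f 0 ->
  (forall s : R, 0 < s -> is_derive s 1 f (df s)) ->
  (forall s : R, 0 < s -> f s < 0 -> 0 <= df s) -> 0 <= f 0 ->
  forall t, 0 <= t -> 0 <= f t.
Proof.
move=> fc fd fp f0 t; rewrite le_eqVlt => /predU1P[<-|t0] //.
rewrite leNgt; apply/negP => ft.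
pose S := [set s : R | 0 <= s <= t /\ 0 <= f s].
have hS : has_sup S.
  split; first by exists 0; split => //; rewrite lexx ltW.
  by exists t => s [/andP[_ ?] _].
pose m := sup S.
have m0 : 0 <= m by apply: sup_upper_bound => //; split => //; rewrite lexx ltW.
have mt : m <= t by apply: ge_sup; [case: hS | move=> s [/andP[_ ?] _]].
have fm : 0 <= f m.
  move: m0; rewrite le_eqVlt => /predU1P[<-//|m0].
  rewrite leNgt; apply/negP => fmn.
  have := cont_of_der (fd m m0).
  move=> /cvgr_lt /(_ 0 fmn).
  move=> /nbhs_ballP [e e0 He].
  have [s Ss ms] := sup_adherent e0 hS.
  have sm : s <= m by apply: sup_upper_bound.
  case: Ss => _; rewrite leNgt => /negP; apply; apply: He.
  rewrite /ball /= ger0_norm ?subr_ge0 //.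
  by rewrite ltrBlDr addrC -ltrBlDr.
have mlt : m < t.
  by rewrite lt_neqAle mt andbT; apply/eqP => mtE; move: ft; rewrite -mtE ltNge fm.
have neg x : m < x -> x <= t -> f x < 0.
  move=> mx xt; rewrite ltNge; apply/negP => fx.
  have : x <= m by apply: sup_upper_bound => //; split => //; rewrite xt (le_trans m0) // ltW.
  by rewrite leNgt mx.
have fcm : f @ m^'+ --> f m.
  move: m0; rewrite le_eqVlt => /predU1P[<-//|m0].
  exact/cvg_at_right_filter/(cont_of_der (fd m m0)).
have : f m <= f t.
  apply: (cvgr_to_le fcm).
  near=> s.
  have s0 : m < s by near: s; exact: nbhs_right_gt.
  have st : s < t by near: s; exact: nbhs_right_lt.
  have sp : 0 < s by exact: le_lt_trans m0 s0.
  apply: (@ger0_derive1_le_cc _ f s t).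
  - move=> x; rewrite in_itv /= => /andP[sx _].
    by have [] := fd x (lt_trans sp sx).
  - move=> x; rewrite in_itv /= => /andP[sx xt].
    rewrite derive1E; have [_ ->] := fd x (lt_trans sp sx); apply: fp.
      exact: lt_trans sp sx.
    by apply: neg; [exact: lt_trans s0 sx| exact: ltW].
  - apply: derivable_within_continuous => x; rewrite in_itv /= => /andP[sx _].
    by have [] := fd x (lt_le_trans sp sx).
  - by rewrite in_itv /= lexx ltW.
  - by rewrite in_itv /= lexx ltW.
  - exact: ltW.
by move=> fmt; move: (le_lt_trans (le_trans fm fmt) ft); rewrite ltxx.
Unshelve. all: end_near.
Qed.

Lemma const0 (f : R -> R) : f @ 0^'+ --> f 0 ->
  (forall s : R, 0 < s -> is_derive s 1 f 0) -> forall t, 0 <= t -> f t = f 0.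
Proof.
move=> fc fd t t0; apply/eqP; rewrite eq_le; apply/andP; split.
  by apply: (@mono0 f (fun _ => 0)) => // s s0; apply: fd.
have := @mono0 (- f) (fun _ => - 0) (cvgN fc) _ _ t t0.
rewrite !fctE lerN2; apply.
  by move=> s s0; apply: is_deriveN; apply: fd.
by move=> s _; rewrite oppr0.
Qed.

Lemma is_derive_lin (k x : R) : is_derive x 1 (fun u : R => k * u) k.
Proof.
apply: is_derive_eq.
by rewrite [_%:A]mulr1.
Qed.

Definition cR (rho : R -> 'M[C]_2) (i j : 'I_2) : R -> R := fun s => Re (rho s i j).
Definition cI (rho : R -> 'M[C]_2) (i j : 'I_2) : R -> R := fun s => Im (rho s i j).

Lemma gron_ineq (G e1 e2 b hr hi eps : R) : 0 <= G -> 0 < eps ->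
  4 * (hr ^+ 2 + hi ^+ 2) <= eps ^+ 2 ->
  - G * (e1 ^+ 2 + e2 ^+ 2) - 2 * G * b ^+ 2 - 6 * b * (hr * e1 + hi * e2)
  <= 3 * eps * (e1 ^+ 2 + e2 ^+ 2 + b ^+ 2).
Proof.
move=> G0 e0 hh.
have q1 : - (2 * b * hr * e1) <= eps / 2 * (b ^+ 2 + e1 ^+ 2).
  have : 0 <= (eps / 2 * b + hr * e1) ^+ 2 + (eps ^+ 2 / 4 - hr ^+ 2) * e1 ^+ 2.
    apply: addr_ge0; first exact: sqr_ge0.
    apply: mulr_ge0; last exact: sqr_ge0.
    have : 0 <= hi ^+ 2 by exact: sqr_ge0.
    lra.
  move=> h.
  have e2p : 0 < eps / 2 by lra.
  rewrite -(ler_pM2l e2p).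
  nra.
have q2 : - (2 * b * hi * e2) <= eps / 2 * (b ^+ 2 + e2 ^+ 2).
  have : 0 <= (eps / 2 * b + hi * e2) ^+ 2 + (eps ^+ 2 / 4 - hi ^+ 2) * e2 ^+ 2.
    apply: addr_ge0; first exact: sqr_ge0.
    apply: mulr_ge0; last exact: sqr_ge0.
    have : 0 <= hr ^+ 2 by exact: sqr_ge0.
    lra.
  move=> h.
  have e2p : 0 < eps / 2 by lra.
  rewrite -(ler_pM2l e2p).
  nra.
have s1 : 0 <= e1 ^+ 2 + e2 ^+ 2 by rewrite addr_ge0 // sqr_ge0.
have s2 : 0 <= b ^+ 2 by exact: sqr_ge0.
have : 0 <= G * (e1 ^+ 2 + e2 ^+ 2) by exact: mulr_ge0.
have : 0 <= G * b ^+ 2 by exact: mulr_ge0.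
nra.
Qed.

Lemma rate_bound (ex ey cr ci ar br G Gm eps S : R) : 0 < eps -> 0 <= G -> G <= Gm ->
  ex ^+ 2 + ey ^+ 2 <= eps ^+ 2 -> cr ^+ 2 + ci ^+ 2 <= ar * br -> ar + br = 1 ->
  0 <= S -> S ^+ 2 = 4 * eps ^+ 2 + Gm ^+ 2 ->
  ex * ci + ey * cr + G * ar <= (S + Gm) / 2.
Proof.
move=> e0 G0 GG hex hc hab S0 hS.
have ab0 : 0 <= ar * br.
  by apply: (le_trans _ hc); rewrite addr_ge0 // sqr_ge0.
have a0 : 0 <= ar.
  rewrite leNgt; apply/negP => an.
  have : ar * br < 0 by nra.
  lra.
have a1 : ar <= 1.
  rewrite leNgt; apply/negP => an.
  have : ar * br < 0 by nra.
  lra.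
pose r := (S + Gm) / 2.
have hr2 : r ^+ 2 = Gm * r + eps ^+ 2 by rewrite /r; rewrite expr2 in hS *; nra.
have Gm0 : 0 <= Gm by lra.
have SG : Gm <= S.
  rewrite leNgt; apply/negP => h.
  have : S ^+ 2 < Gm ^+ 2 by rewrite ltr_pXn2r //; lra.
  have : 0 <= 4 * eps ^+ 2 by rewrite mulr_ge0 // sqr_ge0.
  lra.
have rG : Gm * ar <= r.
  rewrite /r; have : Gm * ar <= Gm by rewrite ler_piMr.
  lra.
pose X := ex * ci + ey * cr.
have hX : X ^+ 2 <= eps ^+ 2 * (ar * br).
  have cs : X ^+ 2 <= (ex ^+ 2 + ey ^+ 2) * (cr ^+ 2 + ci ^+ 2).
    have : 0 <= (ex * cr - ey * ci) ^+ 2 by exact: sqr_ge0.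
    rewrite /X; nra.
  have e2 : 0 <= eps ^+ 2 by rewrite sqr_ge0.
  have c0 : 0 <= cr ^+ 2 + ci ^+ 2 by rewrite addr_ge0 // sqr_ge0.
  have h1 := ler_wpM2r c0 hex.
  have h2 := ler_wpM2l e2 hc.
  lra.
have key : 4 * eps ^+ 2 * (ar * br) <= (r - Gm * ar) ^+ 2.
  have pos : 0 < Gm ^+ 2 + 4 * eps ^+ 2.
    have : 0 < eps ^+ 2 by rewrite exprn_gt0.
    have : 0 <= Gm ^+ 2 by rewrite sqr_ge0.
    lra.
  rewrite -(ler_pM2l pos).
  have id : (Gm ^+ 2 + 4 * eps ^+ 2) * (r - Gm * ar) ^+ 2 -
            (Gm ^+ 2 + 4 * eps ^+ 2) * (4 * eps ^+ 2 * (ar * br)) =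
    ((Gm ^+ 2 + 4 * eps ^+ 2) * ar - (r * Gm + 2 * eps ^+ 2)) ^+ 2
    + 4 * eps ^+ 2 * (r ^+ 2 - Gm * r - eps ^+ 2).
    have -> : br = 1 - ar by lra.
    ring.
  rewrite -subr_ge0 id hr2.
  have -> : Gm * r + eps ^+ 2 - Gm * r - eps ^+ 2 = 0 by ring.
  by rewrite mulr0 addr0 sqr_ge0.
have hX2 : X ^+ 2 <= (r - Gm * ar) ^+ 2.
  apply: (le_trans hX); apply: (le_trans _ key).
  have : 0 <= eps ^+ 2 * (ar * br) by rewrite mulr_ge0 // sqr_ge0.
  lra.
have hXr : X <= r - Gm * ar.
  rewrite leNgt; apply/negP => h.
  have : (r - Gm * ar) ^+ 2 < X ^+ 2.
    have : 0 <= r - Gm * ar by lra.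
    nra.
  lra.
have : G * ar <= Gm * ar by rewrite ler_wpM2r.
rewrite /X /r in hXr *; lra.
Qed.

Lemma mono0' (f : R -> R) : f @ 0^'+ --> f 0 ->
  (forall s : R, 0 < s -> exists d, is_derive s 1 f d /\ d <= 0) ->
  forall t, 0 <= t -> f t <= f 0.
Proof.
move=> fc fd t; rewrite le_eqVlt => /predU1P[<-|t0] //.
apply: (cvgr_to_ge fc).
near=> s.
have s0 : 0 < s by near: s; exact: nbhs_right_gt.
have st : s < t by near: s; exact: nbhs_right_lt.
apply: (@ler0_derive1_le_cc _ f s t).
- move=> x; rewrite in_itv /= => /andP[sx _].
  by have [d [[]]] := fd x (lt_trans s0 sx).
- move=> x; rewrite in_itv /= => /andP[sx _].
  rewrite derive1E; have [d [hd hn]] := fd x (lt_trans s0 sx).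
  by rewrite derive_val.
- apply: derivable_within_continuous => x; rewrite in_itv /= => /andP[sx _].
  by have [d [[]]] := fd x (lt_le_trans s0 sx).
- by rewrite in_itv /= lexx ltW.
- by rewrite in_itv /= lexx ltW.
- exact: ltW.
Unshelve. all: end_near.
Qed.

Lemma barrier' (f : R -> R) : f @ 0^'+ --> f 0 ->
  (forall s : R, 0 < s -> exists d, is_derive s 1 f d /\ (f s < 0 -> 0 <= d)) ->
  0 <= f 0 -> forall t, 0 <= t -> 0 <= f t.
Proof.
move=> fc fd f0.
pose df s := 'D_1 f s.
apply: (@barrier f df fc).
- move=> s s0; have [d [hd _]] := fd s s0.
  by rewrite /df derive_val.
- move=> s s0 fs; have [d [hd hn]] := fd s s0.
  by rewrite /df derive_val; apply: hn.
- exact: f0.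
Qed.

Lemma rhs_comp' (om ex ey dg : R -> R) (g0 : R) (rho : R -> 'M[C]_2) (s : R) :
  let D := lindblad_rhs (Ham om ex ey s) (g0 + dg s) (rho s) in
  (Re (D 0 0) = ex s / 2 * cI rho 1 0 s - ey s / 2 * cR rho 1 0 s - cR rho 0 1 s * (ey s / 2) - cI rho 0 1 s * (ex s / 2) - (g0 + dg s) * cR rho 0 0 s /\
   Im (D 0 0) = - (ex s / 2 * cR rho 1 0 s + ey s / 2 * cI rho 1 0 s - cR rho 0 1 s * (ex s / 2) + cI rho 0 1 s * (ey s / 2)) - (g0 + dg s) * cI rho 0 0 s /\
   Re (D 1 1) = - (ex s / 2 * cI rho 1 0 s - ey s / 2 * cR rho 1 0 s - cR rho 0 1 s * (ey s / 2) - cI rho 0 1 s * (ex s / 2)) + (g0 + dg s) * cR rho 0 0 s /\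
   Im (D 1 1) = (ex s / 2 * cR rho 1 0 s + ey s / 2 * cI rho 1 0 s - cR rho 0 1 s * (ex s / 2) + cI rho 0 1 s * (ey s / 2)) + (g0 + dg s) * cI rho 0 0 s /\
   Re (D 0 1) = (1 + om s) * cI rho 0 1 s + ex s / 2 * (cI rho 1 1 s - cI rho 0 0 s) - ey s / 2 * (cR rho 1 1 s - cR rho 0 0 s) - (g0 + dg s) * cR rho 0 1 s / 2 /\
   Im (D 0 1) = - ((1 + om s) * cR rho 0 1 s + ex s / 2 * (cR rho 1 1 s - cR rho 0 0 s) + ey s / 2 * (cI rho 1 1 s - cI rho 0 0 s)) - (g0 + dg s) * cI rho 0 1 s / 2 /\
   Re (D 1 0) = - (1 + om s) * cI rho 1 0 s - ex s / 2 * (cI rho 1 1 s - cI rho 0 0 s) - ey s / 2 * (cR rho 1 1 s - cR rho 0 0 s) - (g0 + dg s) * cR rho 1 0 s / 2 /\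
   Im (D 1 0) = (1 + om s) * cR rho 1 0 s + ex s / 2 * (cR rho 1 1 s - cR rho 0 0 s) - ey s / 2 * (cI rho 1 1 s - cI rho 0 0 s) - (g0 + dg s) * cI rho 1 0 s / 2).
Proof. exact: (rhs_comp (1 + om s) (ex s) (ey s) (g0 + dg s) (rho s)). Qed.

Lemma ReJ' (z : C) : Re (conjc z) = Re z. Proof. by case: z. Qed.
Lemma ImJ' (z : C) : Im (conjc z) = - Im z. Proof. by case: z. Qed.

End Alg.
Arguments cR {R} rho i j s : simpl never.
Arguments cI {R} rho i j s : simpl never.

Theorem theorem3 (R : realType) (p0 beta alpha eps omega gamma0 gamma : R)
  (om ex ey dg : R -> R) (rho : R -> 'M[complex R]_2) :
  0 < p0 < 1 -> 0 < beta <= 1 -> 0 <= alpha <= 1 -> alpha <= beta ->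
  0 < eps -> 0 <= omega -> 0 <= gamma <= gamma0 ->
  (forall t, `|om t| <= omega) ->
  (forall t, Num.sqrt (ex t ^+ 2 + ey t ^+ 2) <= eps) ->
  (forall t, `|dg t| <= gamma) ->
  density_matrix (rho 0) ->
  mel ket1 (rho 0) ket1 <= rc (alpha * p0) ->
  mx_right_cont0 rho ->
  (forall t, 0 < t ->
     mx_has_deriv rho t (lindblad_rhs (Ham om ex ey t) (gamma0 + dg t) (rho t))) ->
  forall t, 0 <= t <= (1 - beta) * T_a p0 eps gamma0 gamma ->
    in_Da p0 (rho t) /\ fail_prob (rho t) <= rc p0.
Proof.
move=> /andP[p0g p0l] /andP[bg bl] /andP[ag al] ab eg og /andP[gg gg0] hom hE hdg
  [herm [hpos htr]] hini hcont hder t /andP[t0 tT].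
have dR : forall i j (s : R), 0 < s -> is_derive s 1 (cR rho i j)
    (complex.Re (lindblad_rhs (Ham om ex ey s) (gamma0 + dg s) (rho s) i j)).
  by move=> i j s hs; case: (hder s hs i j).
have dI : forall i j (s : R), 0 < s -> is_derive s 1 (cI rho i j)
    (complex.Im (lindblad_rhs (Ham om ex ey s) (gamma0 + dg s) (rho s) i j)).
  by move=> i j s hs; case: (hder s hs i j).
have cRc : forall i j, cR rho i j @ 0^'+ --> cR rho i j 0.
  by move=> i j; case: (hcont i j).
have cIc : forall i j, cI rho i j @ 0^'+ --> cI rho i j 0.
  by move=> i j; case: (hcont i j).
have hG : forall s, 0 <= gamma0 + dg s /\ gamma0 + dg s <= gamma0 + gamma.
  move=> s; have := hdg s; rewrite ler_norml => /andP[h1 h2]; split; lra.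
have hE2 : forall s, ex s ^+ 2 + ey s ^+ 2 <= eps ^+ 2.
  move=> s; have := hE s.
  have q0 : 0 <= ex s ^+ 2 + ey s ^+ 2 by rewrite addr_ge0 // sqr_ge0.
  have h2 := sqr_sqrtr q0; have h3 := sqrtr_ge0 (ex s ^+ 2 + ey s ^+ 2).
  move: h2 h3; move: (Num.sqrt _) => sq h2 h3 h4.
  rewrite -h2; nra.
have conjE : forall i j, conjc (rho 0 j i) = rho 0 i j.
  by move=> i j; rewrite -adjE herm.
have i00 : cI rho 0 0 0 = 0.
  have := congr1 (@complex.Im R) (conjE 0 0); rewrite ImJ' /cI; lra.
have i11 : cI rho 1 1 0 = 0.
  have := congr1 (@complex.Im R) (conjE 1 1); rewrite ImJ' /cI; lra.
have r10 : cR rho 1 0 0 = cR rho 0 1 0.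
  by have := congr1 (@complex.Re R) (conjE 1 0); rewrite ReJ' /cR.
have i10 : cI rho 1 0 0 = - cI rho 0 1 0.
  by have := congr1 (@complex.Im R) (conjE 1 0); rewrite ImJ' /cI.
have tr0 : cR rho 0 0 0 + cR rho 1 1 0 = 1.
  by have := congr1 (@complex.Re R) htr; rewrite tr_mx2 ReD' Re1'.
have RC s := rhs_comp' om ex ey dg gamma0 rho s.
have S1 : forall s, 0 <= s -> cR rho 0 0 s + cR rho 1 1 s = 1.
  move=> s s0; rewrite -tr0.
  have h : forall u : R, 0 < u -> is_derive u 1 (cR rho 0 0 + cR rho 1 1) 0.
    move=> u u0; apply: (is_derive_eq (is_deriveD (dR 0 0 u u0) (dR 1 1 u u0))).
    have [e1 [e2 [e3 [e4 [e5 [e6 [e7 e8]]]]]]] := RC u.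
    rewrite e1 e3; ring.
  have := @const0 R (cR rho 0 0 + cR rho 1 1) (cvgD (cRc 0 0) (cRc 1 1)) h s s0.
  by apply; typeclasses eauto.
have S2 : forall s, 0 <= s -> cI rho 0 0 s + cI rho 1 1 s = 0.
  move=> s s0; transitivity (cI rho 0 0 0 + cI rho 1 1 0); last by rewrite i00 i11 addr0.
  have h : forall u : R, 0 < u -> is_derive u 1 (cI rho 0 0 + cI rho 1 1) 0.
    move=> u u0; apply: (is_derive_eq (is_deriveD (dI 0 0 u u0) (dI 1 1 u u0))).
    have [e1 [e2 [e3 [e4 [e5 [e6 [e7 e8]]]]]]] := RC u.
    rewrite e2 e4; ring.
  have := @const0 R (cI rho 0 0 + cI rho 1 1) (cvgD (cIc 0 0) (cIc 1 1)) h s s0.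
  by apply; typeclasses eauto.
pose K := 3 * eps.
pose e1f := cR rho 1 0 - cR rho 0 1.
pose e2f := cI rho 1 0 + cI rho 0 1.
pose bf := cI rho 1 1.
pose V := e1f * e1f + e2f * e2f + bf * bf.
pose g := fun u : R => (- K) * u.
pose E := expR \o g.
have dE : forall u : R, is_derive u 1 E (expR (g u) * (- K)).
  by move=> u; apply: is_derive1_comp; try exact: is_derive_lin.
have cE : E @ 0^'+ --> E 0 := cvg_at_right_filter (cont_of_der (dE 0)).
have c1 : e1f @ 0^'+ --> e1f 0.
  by have := cvgB (cRc 1 0) (cRc 0 1); apply; typeclasses eauto.
have c2 : e2f @ 0^'+ --> e2f 0.
  by have := cvgD (cIc 1 0) (cIc 0 1); apply; typeclasses eauto.
have c3 : bf @ 0^'+ --> bf 0 := cIc 1 1.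
have cW : (V * E) @ 0^'+ --> (V * E) 0.
  have := (cvgM (cvgD (cvgD (cvgM c1 c1) (cvgM c2 c2)) (cvgM c3 c3)) cE).
  by apply; typeclasses eauto.
have W0 : (V * E) 0 = 0.
  rewrite /V /e1f /e2f /bf !fctE /= r10 i10 i11; ring.
have dW : forall u : R, 0 < u -> exists d, is_derive u 1 (V * E) d /\ d <= 0.
  move=> u u0.
  have h1 := is_deriveB (dR 1 0 u u0) (dR 0 1 u u0).
  have h2 := is_deriveD (dI 1 0 u u0) (dI 0 1 u u0).
  have h3 := dI 1 1 u u0.
  have hV := is_deriveD (is_deriveD (is_deriveM h1 h1) (is_deriveM h2 h2)) (is_deriveM h3 h3).
  eexists; split; first exact: (is_deriveM hV (dE u)).
  set Dv := (X in _ + _ *: X).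
  have hD : Dv <= K * V u.
    rewrite /Dv /V /e1f /e2f /bf !fctE /=.
    rewrite -![_ *: _]/(_ * _).
    have [e1 [e2 [e3 [e4 [e5 [e6 [e7 e8]]]]]]] := RC u.
    rewrite e4 e5 e6 e7 e8.
    have ai : cI rho 0 0 u = - cI rho 1 1 u by have := S2 u (ltW u0); lra.
    rewrite ai.
    have [G0 _] := hG u.
    have hh : 4 * ((ex u / 2) ^+ 2 + (ey u / 2) ^+ 2) <= eps ^+ 2.
      have := hE2 u; rewrite !expr2; lra.
    have := gron_ineq (gamma0 + dg u) (cR rho 1 0 u - cR rho 0 1 u) (cI rho 1 0 u + cI rho 0 1 u)
       (cI rho 1 1 u) (ex u / 2) (ey u / 2) eps G0 eg hh.
    rewrite /K !expr2; lra.
  have -> : E u = expR (g u) by [].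
  rewrite -![_ *: _]/(_ * _).
  have x0 := expR_gt0 (g u).
  rewrite -/e1f -/e2f -/bf -/V.
  move: hD; move: (V u) (expR (g u)) x0 => Vu x x0 hD.
  nra.
have Vz : forall s, 0 <= s ->
    cR rho 1 0 s = cR rho 0 1 s /\ cI rho 1 0 s = - cI rho 0 1 s /\ cI rho 1 1 s = 0.
  move=> s s0.
  have h := mono0' _ cW dW s s0.
  rewrite W0 in h.
  have hx := expR_gt0 (g s).
  have h' : V s * expR (g s) <= 0 by [].
  move: h'; rewrite /V /e1f /e2f /bf !fctE /=.
  move: (expR (g s)) hx => x hx h'.
  have Vn : (cR rho 1 0 s - cR rho 0 1 s) * (cR rho 1 0 s - cR rho 0 1 s) +
    (cI rho 1 0 s + cI rho 0 1 s) * (cI rho 1 0 s + cI rho 0 1 s) +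
    cI rho 1 1 s * cI rho 1 1 s <= 0 by nra.
  have q1 := sqr_ge0 (cR rho 1 0 s - cR rho 0 1 s).
  have q2 := sqr_ge0 (cI rho 1 0 s + cI rho 0 1 s).
  have q3 := sqr_ge0 (cI rho 1 1 s).
  rewrite !expr2 in q1 q2 q3.
  have z1 : (cR rho 1 0 s - cR rho 0 1 s) * (cR rho 1 0 s - cR rho 0 1 s) = 0 by lra.
  have z2 : (cI rho 1 0 s + cI rho 0 1 s) * (cI rho 1 0 s + cI rho 0 1 s) = 0 by lra.
  have z3 : cI rho 1 1 s * cI rho 1 1 s = 0 by lra.
  move/eqP: z1; rewrite mulf_eq0 orbb subr_eq0 => /eqP z1.
  move/eqP: z2; rewrite mulf_eq0 orbb addr_eq0 => /eqP z2.
  move/eqP: z3; rewrite mulf_eq0 orbb => /eqP z3.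
  by [].
pose P := cR rho 0 0 * cR rho 1 1 - (cR rho 0 1 * cR rho 0 1 + cI rho 0 1 * cI rho 0 1).
have cP : P @ 0^'+ --> P 0.
  have := cvgB (cvgM (cRc 0 0) (cRc 1 1))
    (cvgD (cvgM (cRc 0 1) (cRc 0 1)) (cvgM (cIc 0 1) (cIc 0 1))).
  by apply; typeclasses eauto.
have P0 : 0 <= P 0.
  have v1 := hpos (\col_(i < 2) (if i == 0 :> nat then rho 0 0 1 else - rho 0 0 0)).
  have v2 := hpos (\col_(i < 2) (if i == 0 :> nat then rho 0 1 1 else - rho 0 1 0)).
  rewrite mel_vec lecE in v1; rewrite mel_vec lecE in v2.
  move/andP: v1 => [_ v1]; move/andP: v2 => [_ v2].
  rewrite /P !fctE /=.
  move: v1 v2 i00 i11 r10 i10 tr0; rewrite /cR /cI /=.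
  move: (rho 0 0 0) (rho 0 0 1) (rho 0 1 0) (rho 0 1 1) => a c d b.
  move=> v1 v2 i00 i11 r10 i10 tr0.
  rewrite ?(ReD', ImD', ReN', ImN', ReM', ImM', ReJ', ImJ', Re0') in v1.
  rewrite ?(ReD', ImD', ReN', ImN', ReM', ImM', ReJ', ImJ', Re0') in v2.
  rewrite i00 i11 r10 i10 in v1 v2.
  set Pe := (X in 0 <= X).
  have hPe : Pe = complex.Re a * Pe + complex.Re b * Pe by rewrite -mulrDl tr0 mul1r.
  rewrite /Pe in hPe *; lra.
have dP : forall u : R, 0 < u -> exists d, is_derive u 1 P d /\ (P u < 0 -> 0 <= d).
  move=> u u0.
  eexists; split.
    exact: (is_deriveB (is_deriveM (dR 0 0 u u0) (dR 1 1 u u0))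
      (is_deriveD (is_deriveM (dR 0 1 u u0) (dR 0 1 u u0))
                  (is_deriveM (dI 0 1 u u0) (dI 0 1 u u0)))).
  rewrite /P !fctE /=. rewrite -![_ *: _]/(_ * _).
  have [e1 [e2 [e3 [e4 [e5 [e6 [e7 e8]]]]]]] := RC u.
  rewrite e1 e3 e5 e6.
  have [z1 [z2 z3]] := Vz u (ltW u0).
  have ai : cI rho 0 0 u = 0 by have := S2 u (ltW u0); lra.
  rewrite z1 z2 z3 ai.
  have [G0 _] := hG u.
  move=> hP.
  have h1 : 0 <= (gamma0 + dg u) * (cR rho 0 0 u * cR rho 0 0 u -
     (cR rho 0 0 u * cR rho 1 1 u - (cR rho 0 1 u * cR rho 0 1 u + cI rho 0 1 u * cI rho 0 1 u))).
    apply: mulr_ge0 => //.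
    have := sqr_ge0 (cR rho 0 0 u); rewrite expr2; lra.
  lra.
have Pnn : forall s, 0 <= s -> 0 <= P s := barrier' _ cP dP P0.
pose Gm := gamma0 + gamma.
pose S := Num.sqrt (4 * eps ^+ 2 + Gm ^+ 2).
pose r := (S + Gm) / 2.
pose Q := cR rho 1 1 - (fun u : R => r * u).
have cQ : Q @ 0^'+ --> Q 0.
  have := cvgB (cRc 1 1) (cvg_at_right_filter (cont_of_der (is_derive_lin r 0))).
  by apply; typeclasses eauto.
have S0 : 0 <= S := sqrtr_ge0 _.
have S2' : S ^+ 2 = 4 * eps ^+ 2 + Gm ^+ 2.
  have q : 0 <= 4 * eps ^+ 2 + Gm ^+ 2 by have := sqr_ge0 eps; have := sqr_ge0 Gm; lra.
  by rewrite sqr_sqrtr.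
have dQ : forall u : R, 0 < u -> exists d, is_derive u 1 Q d /\ d <= 0.
  move=> u u0; eexists; split.
    exact: (is_deriveB (dR 1 1 u u0) (is_derive_lin r u)).
  have [e1 [e2 [e3 [e4 [e5 [e6 [e7 e8]]]]]]] := RC u.
  rewrite e3.
  have [z1 [z2 z3]] := Vz u (ltW u0).
  rewrite z1 z2.
  have [G0 G1] := hG u.
  have hc : cR rho 0 1 u ^+ 2 + cI rho 0 1 u ^+ 2 <= cR rho 0 0 u * cR rho 1 1 u.
    have := Pnn u (ltW u0); rewrite /P !fctE /= !expr2; lra.
  have hb := rate_bound (ex u) (ey u) (cR rho 0 1 u) (cI rho 0 1 u) (cR rho 0 0 u)
    (cR rho 1 1 u) (gamma0 + dg u) Gm eps S eg G0 G1 (hE2 u) hc (S1 u (ltW u0)) S0 S2'.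
  rewrite /r; lra.
have hQ := mono0' _ cQ dQ t t0.
move: hQ; rewrite /Q !fctE /= mulr0 subr0 => hQ.
have hb0 : cR rho 1 1 0 <= alpha * p0.
  by move: hini; rewrite mel_ket1 lecE => /andP[_ h]; rewrite Rerc in h; exact: h.
have Sp : 0 < S.
  have : 0 < eps ^+ 2 by rewrite exprn_gt0.
  have : 0 <= Gm ^+ 2 by rewrite sqr_ge0.
  move: S2'; rewrite !expr2 => S2'.
  nra.
have Gm0 : 0 <= Gm by rewrite /Gm; lra.
have rT : r * T_a p0 eps gamma0 gamma = p0.
  rewrite /T_a -/Gm -/S /r; field.
  by rewrite gt_eqF // ltr_wpDr.
have r0 : 0 <= r by rewrite /r; lra.
have hrt : r * t <= (1 - beta) * p0.
  have := ler_wpM2l r0 tT; rewrite mulrCA rT; exact.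
have hab : alpha * p0 <= beta * p0 by rewrite ler_wpM2r // ltW.
have bt : cR rho 1 1 t <= p0 by lra.
have [z1 [z2 z3]] := Vz t t0.
have ai := S2 t t0.
have sb := S1 t t0.
split.
- rewrite /in_Da mel_ket0 lecE Imrc Rerc; apply/andP; split.
  + by apply/eqP; change (cI rho 0 0 t = 0); lra.
  + by change (1 - p0 <= cR rho 0 0 t); lra.
- rewrite /fail_prob mel_ket1 lecE Imrc Rerc; apply/andP; split.
  + by apply/eqP; change (0 = cI rho 1 1 t); lra.
  + by change (cR rho 1 1 t <= p0).
Qed.
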